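(* Let $a,b$ be non-negative integers and $c=1$ such that the polynomial $x^3-ax^2-bx-c$ has exactly one real root $\eta_1$, and $\eta_1>1$. Then there exists a real number $U$ such that for any positive integers $n,k$ with $k\ge 4$ and $n\ge U\eta_1^{3k/2}$, there is a positive integer sequence $\langle x_i\rangle_{i=1}^k$ satisfying $x_{i+3}=ax_{i+2}+bx_{i+1}+cx_i$ for $1\le i\le k-3$ and terminating at $x_k=n$.
   Context: A sequence $\langle x_i\rangle_{i=1}^k$ is positive if $x_1,x_2,x_3>0$. *)

(* Defs.v *)
From Stdlib Require Import Reals Lra Lia ZArith.
Open Scope R_scope.

(* A sequence <x_i>_{i=1}^k (indexed from 1; values outside 1..k irrelevant)
   is positive if x_1, x_2, x_3 > 0 (definition from the paper's context). *)
Definition positive_seq (x : nat -> Z) : Prop :=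
  (0 < x 1%nat)%Z /\ (0 < x 2%nat)%Z /\ (0 < x 3%nat)%Z.

Definition satisfies_rec (a b c : Z) (k : nat) (x : nat -> Z) : Prop :=
  forall i : nat, (1 <= i)%nat -> (i <= k - 3)%nat ->
    x (i + 3)%nat = (a * x (i + 2)%nat + b * x (i + 1)%nat + c * x i)%Z.

Definition cubic (a b c : Z) (t : R) : R :=
  t ^ 3 - IZR a * t ^ 2 - IZR b * t - IZR c.

(* Main.v *)
Require Import Defs.
From Stdlib Require Import Reals ZArith Lra Lia Psatz.
Open Scope R_scope.

Lemma pos3 (eta s r x1 x2 x3 : R) : 1 < eta -> 0 < r - s^2/4 ->
  0 < x3 + s*x2 + r*x1 ->
  2 * (eta^2 + s*eta + r + 1 + Rabs (eta+s))^2 * (1+r) / (r - s^2/4) *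
   ((x3 - eta*x2)^2 + s*(x3-eta*x2)*(x2-eta*x1) + r*(x2-eta*x1)^2)
   < (x3 + s*x2 + r*x1)^2 ->
  0 < x1 /\ 0 < x2 /\ 0 < x3.
Proof.
  intros He Hg Hz HK.
  set (y1 := x2 - eta*x1) in *. set (y2 := x3 - eta*x2) in *.
  set (z := x3 + s*x2 + r*x1) in *.
  set (g := r - s^2/4) in *.
  set (D := eta^2 + s*eta + r) in *.
  set (K0 := D + 1 + Rabs (eta+s)) in *.
  set (q := y2^2 + s*y2*y1 + r*y1^2) in *.
  assert (HD : 0 < D).
  { replace D with ((eta + s/2)^2 + g) by (unfold D, g; field). assert (0 <= (eta + s/2)^2) by apply pow2_ge_0. lra. }
  assert (Hr : 0 < r) by (unfold g in Hg; nra).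
  assert (H1 : g * y1^2 <= q).
  { replace q with ((y2 + s*y1/2)^2 + g*y1^2) by (unfold q, g; field). match goal with |- _ <= ?a^2 + _ => assert (0 <= a^2) by apply pow2_ge_0 end. lra. }
  assert (H2 : g * y2^2 <= r*q).
  { replace (r*q) with ((r*y1 + s*y2/2)^2 + g*y2^2) by (unfold q, g; field). match goal with |- _ <= ?a^2 + _ => assert (0 <= a^2) by apply pow2_ge_0 end. lra. }
  assert (Hq : 0 <= q) by nra.
  assert (Hs : g*(y1^2+y2^2) <= (1+r)*q) by nra.
  assert (HK0 : 0 <= Rabs (eta+s)) by apply Rabs_pos.
  assert (HKq : 2*K0^2*(y1^2+y2^2) <= 2 * K0^2 * (1+r) / g * q).
  { unfold Rdiv. replace (2 * K0 ^ 2 * (1 + r) * / g * q) with (2*K0^2 * (((1+r)*q) / g)) by (field; lra).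
    apply Rmult_le_compat_l. nra. apply Rmult_le_reg_r with g; [lra|].
    unfold Rdiv; rewrite Rmult_assoc, Rinv_l by lra. lra. }
  set (Y := Rabs y1 + Rabs y2).
  assert (Ha1 := Rabs_pos y1). assert (Ha2 := Rabs_pos y2).
  assert (HY : Y^2 <= 2*(y1^2+y2^2)).
  { unfold Y. rewrite <- (pow2_abs y1), <- (pow2_abs y2). assert (0 <= (Rabs y1 - Rabs y2)^2) by apply pow2_ge_0. nra. }
  assert (HzY : K0 * Y < z).
  { assert (K0^2 * Y^2 < z^2) by nra.
    destruct (Rle_or_lt z (K0*Y)) as [h|h]; [|lra].
    assert (0 <= K0 * Y) by (unfold K0, Y; nra). nra. }
  assert (HDx : D * x1 = z - y2 - (eta+s)*y1) by (unfold D, z, y1, y2; ring).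
  assert (h1 : -y2 >= - Rabs y2) by (assert (h:= Rle_abs y2); lra).
  assert (h2 : (eta+s)*y1 <= Rabs (eta+s) * Rabs y1) by (rewrite <- Rabs_mult; apply Rle_abs).
  assert (Hx1 : D * Y < D * x1).
  { rewrite HDx. unfold K0 in HzY. unfold Y in *. nra. }
  assert (Hx1' : Y < x1) by nra.
  assert (h3 := Rle_abs y1). assert (h4 := Rle_abs (-y1)). rewrite Rabs_Ropp in h4.
  assert (h5 := Rle_abs (-y2)). rewrite Rabs_Ropp in h5.
  assert (Hx2 : x2 = y1 + eta*x1) by (unfold y1; ring).
  assert (Hx3 : x3 = y2 + eta*x2) by (unfold y2; ring).
  unfold Y in Hx1'.
  assert (x1 < eta*x1) by nra.
  assert (Rabs y2 < x2) by lra.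
  assert (x2 < eta*x2) by nra.
  split; [lra|]. split; lra.
Qed.

Lemma zq (A B eta s r : R) (X : nat -> R) (k : nat) :
  s = eta - A -> r = eta^2 - A*eta - B -> r*eta = 1 ->
  (forall i, (1 <= i)%nat -> (i <= k - 3)%nat -> X (i+3)%nat = A * X (i+2)%nat + B * X (i+1)%nat + X i) ->
  forall j, (j <= k-3)%nat ->
   X (S (S (1+j))) + s * X (S (1+j)) + r * X (1+j)%nat = eta^j * (X 3%nat + s * X 2%nat + r * X 1%nat) /\
   ((X 3%nat - eta * X 2%nat)^2 + s*(X 3%nat - eta*X 2%nat)*(X 2%nat - eta * X 1%nat) + r*(X 2%nat - eta*X 1%nat)^2)
   = eta^j * ((X (S (S (1+j))) - eta * X (S (1+j)))^2 + s*(X (S (S (1+j))) - eta*X (S (1+j)))*(X (S (1+j)) - eta * X (1+j)%nat) + r*(X (S (1+j)) - eta*X (1+j)%nat)^2).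
Proof.
  intros hs hr hre H j. induction j as [|j IH]; intros hj.
  - simpl. split; ring.
  - destruct IH as [IH1 IH2]; [lia|].
    assert (HR := H (1+j)%nat ltac:(lia) ltac:(lia)).
    replace (1 + j + 3)%nat with (S (S (S (1+j)))) in HR by lia.
    replace (1 + j + 2)%nat with (S (S (1+j))) in HR by lia.
    replace (1 + j + 1)%nat with (S (1+j)) in HR by lia.
    replace (1 + S j)%nat with (S (1+j)) by lia.
    set (u0 := X (1+j)%nat) in *. set (u1 := X (S (1+j))) in *.
    set (u2 := X (S (S (1+j)))) in *. set (u3 := X (S (S (S (1+j))))) in *.
    assert (hp : eta^(S j) = eta * eta^j) by reflexivity.
    rewrite hp. split.
    + rewrite Rmult_assoc, <- IH1, HR. replace u0 with (r*eta*u0) at 1 by (rewrite hre; ring). subst s r. ring.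
    + rewrite IH2. replace u3 with (A * u2 + B * u1 + r*eta*u0) by (rewrite HR, hre; ring). replace (eta*eta^j) with (eta^j*eta) by ring. rewrite (Rmult_assoc (eta^j) eta). apply Rmult_eq_compat_l.
      transitivity (r*eta*((u2 - eta * u1) ^ 2 + s * (u2 - eta * u1) * (u1 - eta * u0) + r * (u1 - eta * u0) ^ 2)); [rewrite hre; ring|].
      subst s r. ring.
Qed.

Lemma gpos (A B eta : R) : 1 < eta ->
  eta^3 - A*eta^2 - B*eta - 1 = 0 ->
  (forall t, t^3 - A*t^2 - B*t - 1 = 0 -> t = eta) ->
  0 < (eta^2 - A*eta - B) - (eta - A)^2/4.
Proof.
  intros He Hc Hu.
  set (s := eta - A). set (r := eta^2 - A*eta - B).
  assert (fac : forall t, t^3 - A*t^2 - B*t - 1 = (t - eta)*(t^2 + s*t + r)).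
  { intros t. unfold s, r. nra. }
  destruct (Rlt_or_le 0 (r - s^2/4)) as [h|h]; [exact h|].
  exfalso.
  set (d := sqrt (s^2 - 4*r)).
  assert (hd : d*d = s^2 - 4*r) by (apply sqrt_sqrt; lra).
  assert (hd0 : 0 <= d) by apply sqrt_pos.
  assert (t0 : (-s + d)/2 = eta). { apply Hu. rewrite fac. replace (((-s+d)/2)^2 + s*((-s+d)/2) + r) with ((d*d - s^2 + 4*r)/4) by field. rewrite hd. field. }
  assert (t1 : (-s - d)/2 = eta). { apply Hu. rewrite fac. replace (((-s-d)/2)^2 + s*((-s-d)/2) + r) with ((d*d - s^2 + 4*r)/4) by field. rewrite hd. field. }
  assert (d = 0) by lra.
  assert (s = -2*eta) by lra.
  assert (r = eta^2) by nra.
  assert (r*eta = 1) by (unfold r; nra).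
  nra.
Qed.

Fixpoint back (a b n0 q0 p0 : Z) (j : nat) : Z*Z*Z :=
  match j with
  | O => (n0, q0, p0)
  | S j => let '(u, v, t) := back a b n0 q0 p0 j in (v, t, (u - a*v - b*t)%Z)
  end.
Definition wseq a b n0 q0 p0 j := fst (fst (back a b n0 q0 p0 j)).

Lemma wrec a b n0 q0 p0 j :
  wseq a b n0 q0 p0 (S (S (S j))) =
   (wseq a b n0 q0 p0 j - a * wseq a b n0 q0 p0 (S j) - b * wseq a b n0 q0 p0 (S (S j)))%Z.
Proof.
  unfold wseq. simpl. destruct (back a b n0 q0 p0 j) as [[u v] t]. simpl. reflexivity.
Qed.

Theorem theorem7 (a b c : Z) (eta1 : R) :
  (0 <= a)%Z -> (0 <= b)%Z -> c = 1%Z ->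
  cubic a b c eta1 = 0 ->
  (forall t : R, cubic a b c t = 0 -> t = eta1) ->
  1 < eta1 ->
  exists U : R, forall n k : nat,
    (0 < n)%nat -> (4 <= k)%nat ->
    U * Rpower eta1 (3 * INR k / 2) <= INR n ->
    exists x : nat -> Z,
      positive_seq x /\ satisfies_rec a b c k x /\ x k = Z.of_nat n.
Proof.
  intros Ha Hb Hc Hcub Huniq He. subst c.
  set (eta := eta1) in *.
  set (A := IZR a). set (B := IZR b).
  unfold cubic in Hcub, Huniq. change (IZR 1) with 1 in Hcub, Huniq.
  assert (Hg := gpos A B eta He Hcub Huniq).
  set (s := eta - A) in *. set (r := eta^2 - A*eta - B) in *.
  assert (hre : r * eta = 1).
  { assert (r*eta = eta^3 - A*eta^2 - B*eta) by (unfold r; ring). unfold A, B in H. lra. }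
  set (g := r - s^2/4) in *.
  set (D := eta^2 + s*eta + r).
  set (K0 := D + 1 + Rabs (eta+s)).
  set (K := 2 * K0^2 * (1+r) / g).
  set (C0 := eta^2 + Rabs s * eta^2 + r*eta^2).
  set (alpha := D / eta^2).
  set (beta := Rabs s + 2*r).
  set (L := K*C0 + 1).
  assert (HD : 0 < D).
  { replace D with ((eta + s/2)^2 + g) by (unfold D, g; field). assert (0 <= (eta + s/2)^2) by apply pow2_ge_0. lra. }
  assert (Hr : 0 < r) by (unfold g in Hg; nra).
  assert (Habs := Rabs_pos s).
  assert (Heta2 : 1 < eta^2) by nra.
  assert (HK : 0 <= K).
  { unfold K. apply Rmult_le_pos; [|left; apply Rinv_0_lt_compat; lra].
    assert (0 <= K0^2) by apply pow2_ge_0. nra. }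
  assert (HC0 : 0 <= C0) by (unfold C0; nra).
  assert (Halpha : 0 < alpha) by (unfold alpha; apply Rdiv_lt_0_compat; lra).
  assert (Hbeta : 0 <= beta) by (unfold beta; lra).
  exists ((beta + L) / alpha).
  intros n k Hn Hk HU.
  set (N := INR n) in *.
  set (Q' := Int_part (N / eta)).
  set (P := Int_part (IZR Q' / eta)).
  set (w := wseq a b (Z.of_nat n) Q' P).
  set (x := fun i => w (k - i)%nat).
  assert (Hrec : satisfies_rec a b 1 k x).
  { intros i h1 h2. unfold x.
    replace (k - i)%nat with (S (S (S (k - i - 3)))) by lia.
    replace (k - (i+1))%nat with (S (S (k - i - 3))) by lia.
    replace (k - (i+2))%nat with (S (k - i - 3)) by lia.
    replace (k - (i+3))%nat with (k - i - 3)%nat by lia.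
    unfold w. rewrite wrec. ring. }
  exists x. split; [|split; [exact Hrec|]].
  2:{ unfold x. rewrite Nat.sub_diag. reflexivity. }
  set (X := fun i => IZR (x i)).
  assert (HrecR : forall i, (1 <= i)%nat -> (i <= k - 3)%nat -> X (i+3)%nat = A * X (i+2)%nat + B * X (i+1)%nat + X i).
  { intros i h1 h2. unfold X. rewrite (Hrec i h1 h2). rewrite !plus_IZR, !mult_IZR. change (IZR 1) with 1. unfold A, B. ring. }
  destruct (zq A B eta s r X k eq_refl eq_refl hre HrecR (k-3) (le_n _)) as [Hz Hq].
  replace (1 + (k-3))%nat with (k-2)%nat in Hz, Hq by lia.
  replace (S (k-2)) with (k-1)%nat in Hz, Hq by lia.
  replace (S (k-1)) with k in Hz, Hq by lia.
  assert (Xk : X k = N).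
  { unfold X, x. rewrite Nat.sub_diag. unfold N. rewrite INR_IZR_INZ. reflexivity. }
  assert (Xk1 : X (k-1)%nat = IZR Q').
  { unfold X, x. replace (k - (k-1))%nat with 1%nat by lia. reflexivity. }
  assert (Xk2 : X (k-2)%nat = IZR P).
  { unfold X, x. replace (k - (k-2))%nat with 2%nat by lia. reflexivity. }
  rewrite Xk, Xk1, Xk2 in Hz, Hq.
  set (z1 := X 3%nat + s * X 2%nat + r * X 1%nat) in *.
  set (Em := eta ^ (k-3)) in *.
  set (y1 := N - eta * IZR Q') in *.
  set (y2 := IZR Q' - eta * IZR P) in *.
  set (zk := N + s * IZR Q' + r * IZR P) in *.
  assert (HQ := base_Int_part (N/eta)). fold Q' in HQ.
  assert (HP := base_Int_part (IZR Q'/eta)). fold P in HP.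
  assert (Hy1 : 0 <= y1 < eta).
  { assert (eta * (N/eta) = N) by (field; lra). unfold y1. split; nra. }
  assert (Hy2 : 0 <= y2 < eta).
  { assert (eta * (IZR Q'/eta) = IZR Q') by (field; lra). unfold y2. split; nra. }
  assert (Hzk : zk * eta^2 = N*D - (s*eta + r)*y1 - r*eta*y2) by (unfold zk, y1, y2, D; ring).
  assert (hs1 : s * y1 <= Rabs s * y1) by (apply Rmult_le_compat_r; [lra|apply Rle_abs]).
  assert (hs2 : s * (y1*y2) <= Rabs s * (y1*y2)) by (apply Rmult_le_compat_r; [nra|apply Rle_abs]).
  assert (Hzb : alpha * N - beta <= zk).
  { assert (alpha * eta^2 = D) by (unfold alpha; field; lra).
    assert ((s*eta + r)*y1 + r*eta*y2 <= beta * eta^2).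
    { unfold beta.
      assert (Rabs s * y1 <= Rabs s * eta) by (apply Rmult_le_compat_l; lra).
      assert (e1 : s*eta*y1 <= Rabs s * eta * eta) by nra.
      assert (e2 : r*y1 <= r*eta^2) by nra.
      assert (e3 : r*eta*y2 <= r*eta*eta) by nra.
      replace (eta^2) with (eta*eta) in * by ring. nra. }
    assert ((alpha * N - beta)*eta^2 <= zk*eta^2) by nra.
    nra. }
  assert (Hqk : y1 ^ 2 + s * y1 * y2 + r * y2 ^ 2 <= C0).
  { unfold C0.
    assert (f1 : y1^2 <= eta^2) by nra.
    assert (f2 : y1*y2 <= eta*eta) by nra.
    assert (f3 : Rabs s * (y1*y2) <= Rabs s * (eta*eta)) by (apply Rmult_le_compat_l; lra).
    assert (f4 : y2^2 <= eta^2) by nra.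
    assert (f5 : r*y2^2 <= r*eta^2) by (apply Rmult_le_compat_l; lra).
    replace (s*y1*y2) with (s*(y1*y2)) by ring. replace (eta^2) with (eta*eta) in * by ring. lra. }
  assert (Hqk0 : 0 <= y1 ^ 2 + s * y1 * y2 + r * y2 ^ 2).
  { replace (y1 ^ 2 + s * y1 * y2 + r * y2 ^ 2) with ((y1 + s*y2/2)^2 + g*y2^2) by (unfold g; field).
    assert (0 <= (y1 + s*y2/2)^2) by apply pow2_ge_0. nra. }
  set (E := Rpower eta (3 * INR k / 2)) in *.
  assert (HE2 : E * E = eta ^ (3*k)).
  { unfold E. rewrite <- Rpower_plus. rewrite <- Rpower_pow by lra. f_equal. rewrite mult_INR. simpl. field. }
  assert (HEpos : 0 < E) by (unfold E, Rpower; apply exp_pos).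
  assert (Hk3 : 1 <= eta ^ (3*k)) by (apply pow_R1_Rle; lra).
  assert (HE1 : 1 <= E) by nra.
  assert (HEm : 0 < Em) by (unfold Em; apply pow_lt; lra).
  assert (HEm3 : Em^3 <= eta^(3*k)).
  { unfold Em. rewrite <- pow_mult. replace (3*k)%nat with ((k-3)*3 + 9)%nat by lia.
    rewrite pow_add. assert (1 <= eta^9) by (apply pow_R1_Rle; lra).
    assert (0 < eta^((k-3)*3)) by (apply pow_lt; lra). nra. }
  assert (HLE : L * E <= alpha * N - beta).
  { assert (alpha * ((beta + L) / alpha) = beta + L) by (field; lra).
    assert (alpha * ((beta + L) / alpha * E) <= alpha * N) by (apply Rmult_le_compat_l; lra).
    assert (HL1 : 1 <= L) by (unfold L; nra).
    nra. }
  assert (HL1 : 1 <= L) by (unfold L; nra).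
  assert (Hzkpos : 0 < zk) by nra.
  assert (Hmain : K * Em^3 * (y1 ^ 2 + s * y1 * y2 + r * y2 ^ 2) < zk^2).
  { assert (L*L*(E*E) <= zk^2).
    { assert (0 <= L*E) by nra. assert (0 <= (zk - L*E)*(zk + L*E)) by (apply Rmult_le_pos; lra). nra. }
    assert (K*C0*(E*E) < L*(E*E)) by (unfold L; nra).
    assert (K * Em^3 * (y1 ^ 2 + s * y1 * y2 + r * y2 ^ 2) <= K * C0 * (E*E)).
    { rewrite HE2. rewrite !Rmult_assoc. apply Rmult_le_compat_l; [lra|].
      rewrite (Rmult_comm C0). apply Rmult_le_compat; try lra. apply pow_le; lra. }
    nra. }
  assert (Hz1 : 0 < z1) by nra.
  assert (HKq : K * ((X 3%nat - eta * X 2%nat) ^ 2 + s * (X 3%nat - eta * X 2%nat) * (X 2%nat - eta * X 1%nat) +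
      r * (X 2%nat - eta * X 1%nat) ^ 2) < z1^2).
  { rewrite Hq. apply Rmult_lt_reg_r with (Em^2); [nra|].
    replace (z1^2*Em^2) with (zk^2) by (rewrite Hz; ring).
    replace (K * (Em * (y1 ^ 2 + s * y1 * y2 + r * y2 ^ 2)) * Em ^ 2) with (K * Em^3 * (y1 ^ 2 + s * y1 * y2 + r * y2 ^ 2)) by ring.
    exact Hmain. }
  destruct (pos3 eta s r (X 1%nat) (X 2%nat) (X 3%nat) He Hg Hz1 HKq) as [p1 [p2 p3]].
  unfold X in p1, p2, p3.
  split; [|split]; apply lt_IZR; assumption.
Qed.
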